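(* Let $G=(V,E)$ be an undirected graph (finite or infinite), $X$ a ``strong'' partitive set of $G$, and $M=M(S)$ a multiplex of $G$ generated by a simplex $S=(V_S,E_S)$. If $M\cap E(X)\neq\emptyset$, then $M\subseteq E(X)$.
   Context: A graph $G=(V,E)$ has vertex set $V$ and edge set $E\subseteq V^2$; it is undirected if $E$ is irreflexive and symmetric. For $X\subseteq V$, $E(X)=\{(a,b)\in E:a,b\in X\}$. A set $X\subseteq V$ is a partitive set of $G$ if for all $a,b\in X$ and $c\in V\setminus X$: $(a,c)\in E\Leftrightarrow(b,c)\in E$ and $(c,a)\in E\Leftrightarrow(c,b)\in E$; $I(G)$ is the class of partitive sets. A ``strong'' partitive set is an $X\in I(G)$ such that for every $Y\in I(G)$ with $X\cap Y\neq\emptyset$, $X\subseteq Y$ or $Y\subseteq X$. Implication classes: on $E$ define $(a,b)\Gamma(a',b')$ iff either $a=a'$ and $(b,b')\notin E$, or $b=b'$ and $(a,a')\notin E$; the classes of the transitive closure $\Gamma^*$ are the implication classes. For an implication class $A$, $A^{-1}=\{(b,a):(a,b)\in A\}$ and the color class is $\widehat A=A\cup A^{-1}$. A simplex of rank $r\ge1$ is a complete sub-graph $S=(V_S,E_S)$ of $G$ on $r+1$ vertices whose distinct undirected edges lie in distinct color classes. The multiplex generated by $S$ is $M(S)=\bigcup\{\widehat A:\widehat A\text{ a color class},\ \widehat A\cap E_S\neq\emptyset\}$. *)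

(* Defs.v *)
From Stdlib Require Import List Relations.
Import ListNotations.

Section GraphDefs.
Variable V : Type.
Variable E : V -> V -> Prop.

Definition undirected : Prop :=
  (forall a, ~ E a a) /\ (forall a b, E a b -> E b a).

Definition edges_in (X : V -> Prop) (p : V * V) : Prop :=
  E (fst p) (snd p) /\ X (fst p) /\ X (snd p).

Definition partitive (X : V -> Prop) : Prop :=
  forall a b c, X a -> X b -> ~ X c ->
    (E a c <-> E b c) /\ (E c a <-> E c b).

Definition strong_partitive (X : V -> Prop) : Prop :=
  partitive X /\
  forall Y, partitive Y -> (exists v, X v /\ Y v) ->
    (forall v, X v -> Y v) \/ (forall v, Y v -> X v).

Definition Gamma (p q : V * V) : Prop :=
  E (fst p) (snd p) /\ E (fst q) (snd q) /\
  ((fst p = fst q /\ ~ E (snd p) (snd q)) \/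
   (snd p = snd q /\ ~ E (fst p) (fst q))).

Definition impl_class (p : V * V) (q : V * V) : Prop :=
  E (fst q) (snd q) /\ clos_refl_trans (V * V) Gamma p q.

Definition swap (q : V * V) : V * V := (snd q, fst q).

Definition color_class (p : V * V) (q : V * V) : Prop :=
  impl_class p q \/ impl_class p (swap q).

Definition simplex_edges (vs : list V) (e : V * V) : Prop :=
  In (fst e) vs /\ In (snd e) vs /\ E (fst e) (snd e).

(* S is a simplex of rank r = length vs - 1 >= 1 *)
Definition simplex (vs : list V) : Prop :=
  NoDup vs /\ 2 <= length vs /\
  (forall a b, In a vs -> In b vs -> a <> b -> E a b) /\
  (forall a b c d, In a vs -> In b vs -> In c vs -> In d vs ->
     a <> b -> c <> d -> ~ ((a = c /\ b = d) \/ (a = d /\ b = c)) ->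
     ~ (forall q, color_class (a, b) q <-> color_class (c, d) q)).

Definition multiplex (vs : list V) (q : V * V) : Prop :=
  exists p, E (fst p) (snd p) /\
    (exists e, simplex_edges vs e /\ color_class p e) /\
    color_class p q.

End GraphDefs.

(* Main.v *)
Require Import Defs.
From Stdlib Require Import List Relations Classical.

Lemma gamma_sym (V : Type) (E : V -> V -> Prop) p q :
  undirected V E -> Gamma V E p q -> Gamma V E q p.
Proof.
  intros [Hirr Hs] [H1 [H2 H3]]. split; [exact H2|split; [exact H1|]].
  destruct H3 as [[Ha Hb]|[Ha Hb]]; [left|right]; split; auto.
Qed.

Lemma gamma_swap (V : Type) (E : V -> V -> Prop) p q : undirected V E ->
  Gamma V E p q -> Gamma V E (swap V p) (swap V q).
Proof.
  intros [_ Hs].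
  destruct p as [p1 p2], q as [q1 q2]; unfold Gamma, swap; simpl.
  intros [H1 [H2 H3]]. split; [|split]; auto.
  destruct H3 as [[Ha Hb]|[Ha Hb]]; [right|left]; auto.
Qed.

Lemma rt_sym (V : Type) (E : V -> V -> Prop) p q :
  undirected V E -> clos_refl_trans (V*V) (Gamma V E) p q ->
  clos_refl_trans (V*V) (Gamma V E) q p.
Proof.
  intros U H. induction H.
  - apply rt_step. apply gamma_sym; auto.
  - apply rt_refl.
  - eapply rt_trans; eauto.
Qed.

Lemma rt_swap (V : Type) (E : V -> V -> Prop) p q : undirected V E ->
  clos_refl_trans (V*V) (Gamma V E) p q ->
  clos_refl_trans (V*V) (Gamma V E) (swap V p) (swap V q).
Proof.
  intros U H. induction H.
  - apply rt_step. apply gamma_swap; auto.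
  - apply rt_refl.
  - eapply rt_trans; eauto.
Qed.

Lemma swap_swap (V : Type) (q : V * V) : swap V (swap V q) = q.
Proof. destruct q; reflexivity. Qed.

Lemma cc_E (V : Type) (E : V -> V -> Prop) p q :
  undirected V E -> color_class V E p q -> E (fst q) (snd q).
Proof.
  intros [_ Hs] [[H _]|[H _]]; [auto|]. destruct q; simpl in *; auto.
Qed.

Lemma cc_swap (V : Type) (E : V -> V -> Prop) p q :
  color_class V E p q -> color_class V E p (swap V q).
Proof.
  intros [H|H]; [right|left]; rewrite ?swap_swap; auto.
Qed.

Lemma cc_step (V : Type) (E : V -> V -> Prop) p q r : undirected V E ->
  color_class V E p q -> Gamma V E q r -> color_class V E p r.
Proof.
  intros U [[_ H]|[_ H]] G.
  - left. split; [apply G|]. eapply rt_trans; [exact H|]. apply rt_step; auto.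
  - right. pose proof (gamma_swap V E _ _ U G) as G'. split; [apply G'|].
    eapply rt_trans; [exact H|]. apply rt_step; auto.
Qed.

Lemma cc_sym (V : Type) (E : V -> V -> Prop) p q :
  undirected V E -> E (fst p) (snd p) -> color_class V E p q -> color_class V E q p.
Proof.
  intros U Ep [[_ H]|[_ H]].
  - left. split; auto. apply rt_sym; auto.
  - right. split.
    + destruct p; simpl in *; apply U; auto.
    + apply rt_sym in H; auto. apply rt_swap in H; auto.
      rewrite swap_swap in H. exact H.
Qed.

Lemma cc_trans (V : Type) (E : V -> V -> Prop) p q r : undirected V E ->
  color_class V E p q -> color_class V E q r -> color_class V E p r.
Proof.
  intros U [[_ H]|[_ H]] [[Er H']|[Er H']].
  - left. split; auto. eapply rt_trans; eauto.
  - right. split; auto. eapply rt_trans; eauto.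
  - right. split.
    + destruct r; simpl in *; apply U; auto.
    + eapply rt_trans; [exact H|]. apply rt_swap; auto.
  - left. split.
    + destruct r; simpl in *; apply U; auto.
    + eapply rt_trans; [exact H|].
      apply rt_swap in H'; auto. rewrite swap_swap in H'. exact H'.
Qed.

Lemma ein_gamma (V : Type) (E : V -> V -> Prop) (X : V -> Prop) p q :
  undirected V E -> partitive V E X -> Gamma V E p q ->
  edges_in V E X p -> edges_in V E X q.
Proof.
  intros [Hirr Hs] P. destruct p as [p1 p2], q as [q1 q2].
  unfold Gamma, edges_in; simpl.
  intros [H1 [H2 H3]] [_ [X1 X2]].
  destruct H3 as [[Ha Hb]|[Ha Hb]]; subst.
  - split; auto. split; auto. destruct (classic (X q2)) as [|nX]; auto.
    exfalso. destruct (P q1 p2 q2 X1 X2 nX) as [[Hx _] _]. auto.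
  - split; auto. split; auto. destruct (classic (X q1)) as [|nX]; auto.
    exfalso. destruct (P q2 p1 q1 X2 X1 nX) as [_ [Hx _]]. auto.
Qed.

Lemma ein_rt (V : Type) (E : V -> V -> Prop) (X : V -> Prop) p q :
  undirected V E -> partitive V E X -> clos_refl_trans (V*V) (Gamma V E) p q ->
  edges_in V E X p -> edges_in V E X q.
Proof.
  intros U P H. induction H; auto. apply ein_gamma; auto.
Qed.

Lemma ein_cc (V : Type) (E : V -> V -> Prop) (X : V -> Prop) p q :
  undirected V E -> partitive V E X -> color_class V E p q ->
  edges_in V E X p -> edges_in V E X q.
Proof.
  intros U P [[_ H]|[_ H]] Hp.
  - eapply ein_rt; eauto.
  - pose proof (ein_rt V E X _ _ U P H Hp) as Hq.
    destruct q as [q1 q2]; destruct Hq as [Eq [Xa Xb]]; simpl in *.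
    split; [apply U; auto|]. simpl; auto.
Qed.

Lemma ein_back (V : Type) (E : V -> V -> Prop) (X : V -> Prop) p q :
  undirected V E -> partitive V E X -> E (fst p) (snd p) -> color_class V E p q ->
  edges_in V E X q -> edges_in V E X p.
Proof.
  intros U P Ep H Hq. eapply ein_cc; eauto. apply cc_sym; auto.
Qed.


Definition Kp (V : Type) (E : V -> V -> Prop) (X : V -> Prop) (vk vi w : V) :=
  ~ X w /\ forall z, X z -> color_class V E (vk, vi) (w, z) ->
                     color_class V E (vk, vi) (vk, z).

Definition Jp (V : Type) (E : V -> V -> Prop) (X : V -> Prop) (vk vi : V) (e : V * V) :=
  (X (fst e) /\ Kp V E X vk vi (snd e)) \/ (X (snd e) /\ Kp V E X vk vi (fst e)).

Lemma step_lemma (V : Type) (E : V -> V -> Prop) (X : V -> Prop) (vk vi vj s a b : V) :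
  undirected V E -> partitive V E X -> X vj ->
  ~ color_class V E (vk, vi) (vk, vj) ->
  E s a -> E s b -> ~ E a b ->
  (X s /\ Kp V E X vk vi a) \/ (X a /\ Kp V E X vk vi s) ->
  color_class V E (vk, vi) (s, b) ->
  (X s /\ Kp V E X vk vi b) \/ (X b /\ Kp V E X vk vi s).
Proof.
  intros U P Xvj nA Esa Esb nab H Asb. pose proof U as [Hirr Hs].
  destruct H as [[Xs [nXa Ka]] | [Xa [nXs Ks]]].
  - destruct (classic (X b)) as [Xb|nXb].
    + exfalso. destruct (P s b a Xs Xb nXa) as [[H1 _] _]. apply nab. apply Hs. auto.
    + left. split; auto. split; auto. intros z Xz Abz.
      apply Ka; auto.
      assert (Eza : E z a). { destruct (P s z a Xs Xz nXa) as [[H1 _] _]. auto. }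
      assert (Ezb : E z b). { destruct (P s z b Xs Xz nXb) as [[H1 _] _]. auto. }
      apply cc_step with (q := (b, z)); auto.
      split; [simpl; apply Hs; exact Ezb|split; [simpl; apply Hs; exact Eza|]].
      right. simpl. split; [reflexivity|]. intro Hba; apply nab; apply Hs; exact Hba.
  - destruct (classic (X b)) as [Xb|nXb].
    + right. split; auto. split; auto.
    + exfalso. apply nA. apply Ks; auto.
      assert (Esvj : E s vj). { destruct (P a vj s Xa Xvj nXs) as [[H1 _] _]. apply Hs. apply H1. auto. }
      assert (nbvj : ~ E b vj). { intro Hb. destruct (P a vj b Xa Xvj nXb) as [[H1 H2] _].
        apply nab. apply H2. apply Hs. exact Hb. }
      apply cc_step with (q := (s, b)); auto.
      split; [simpl; auto|split; [simpl; auto|]]. left. simpl. split; auto.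
Qed.

Lemma reach_J (V : Type) (E : V -> V -> Prop) (X : V -> Prop) (vk vi vj : V) q :
  undirected V E -> partitive V E X -> ~ X vk -> X vi -> X vj -> E vk vi ->
  ~ color_class V E (vk, vi) (vk, vj) ->
  clos_refl_trans (V*V) (Gamma V E) (vk, vi) q -> Jp V E X vk vi q.
Proof.
  intros U P nXk Xi Xj Eki nA H. apply clos_rt_rtn1 in H.
  induction H as [|y q G Hr IH].
  - unfold Jp, Kp. right. simpl. split; auto.
  - assert (Aq : color_class V E (vk, vi) q).
    { left. split; [apply G|]. apply clos_rtn1_rt. econstructor; eauto. }
    destruct y as [y1 y2], q as [q1 q2].
    unfold Jp in *; simpl in *.
    destruct G as [Ey [Eq [[e1 ne] | [e2 ne]]]]; simpl in *; subst.
    + exact (step_lemma V E X vk vi vj q1 y2 q2 U P Xj nA Ey Eq ne IH Aq).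
    + pose proof U as [_ Hs].
      assert (Aq' : color_class V E (vk, vi) (q2, q1)) by (apply (cc_swap V E _ (q1,q2)) in Aq; exact Aq).
      destruct (step_lemma V E X vk vi vj q2 y1 q1 U P Xj nA (Hs _ _ Ey) (Hs _ _ Eq) ne
                  ltac:(tauto) Aq'); tauto.
Qed.

Lemma A_J (V : Type) (E : V -> V -> Prop) (X : V -> Prop) (vk vi vj : V) q :
  undirected V E -> partitive V E X -> ~ X vk -> X vi -> X vj -> E vk vi ->
  ~ color_class V E (vk, vi) (vk, vj) ->
  color_class V E (vk, vi) q -> Jp V E X vk vi q.
Proof.
  intros U P nXk Xi Xj Eki nA [[_ H]|[_ H]].
  - eapply reach_J; eauto.
  - pose proof (reach_J V E X vk vi vj _ U P nXk Xi Xj Eki nA H) as J.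
    destruct q; unfold Jp in *; simpl in *; tauto.
Qed.

Lemma no_cross (V : Type) (E : V -> V -> Prop) (X : V -> Prop) (vk vi vj : V) :
  undirected V E -> strong_partitive V E X -> ~ X vk -> X vi -> X vj -> E vk vi ->
  ~ color_class V E (vk, vi) (vk, vj) -> False.
Proof.
  intros U [P St] nXk Xi Xj Eki nA. pose proof U as [Hirr Hs].
  set (A := color_class V E (vk, vi)).
  set (Y := fun y => exists q, A q /\ (fst q = y \/ snd q = y)).
  assert (A0 : A (vk, vi)). { left. split; [exact Eki| apply rt_refl]. }
  assert (L : forall q c, A q -> ~ Y c -> (E (fst q) c <-> E (snd q) c)).
  { intros [q1 q2] c Aq nYc. simpl.
    assert (Eq : E q1 q2) by (apply (cc_E V E _ _ U Aq)).
    split; intro H1.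
    - destruct (classic (E q2 c)) as [H2|H2]; auto; exfalso; apply nYc.
      exists (q1, c). split; [|simpl; auto].
      apply cc_step with (q := (q1, q2)); auto.
      split; [exact Eq|split; [exact H1|]]. left. simpl. auto.
    - destruct (classic (E q1 c)) as [H2|H2]; auto; exfalso; apply nYc.
      exists (c, q2). split; [|simpl; auto].
      apply cc_step with (q := (q1, q2)); auto.
      split; [exact Eq|split; [simpl; apply Hs; exact H1|]]. right. simpl.
      split; auto. }
  assert (Jq : forall q, A q -> Jp V E X vk vi q).
  { intros q Aq. eapply A_J; eauto. }
  assert (nYj : ~ Y vj).
  { intros [[q1 q2] [Aq Hq]]. destruct (Jq _ Aq) as [[X1 [nX2 K2]]|[X2 [nX1 K1]]];
    simpl in *.
    - destruct Hq as [<-|<-]; [|contradiction].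
      apply nA. apply K2; auto. apply (cc_swap V E _ (q1, q2)). exact Aq.
    - destruct Hq as [<-|<-]; [contradiction|].
      apply nA. apply K1; auto. }
  assert (Hx : forall x c, ~ Y c -> (exists q, A q /\ Jp V E X vk vi q /\ (fst q = x \/ snd q = x)) ->
                 (E x c <-> E vi c)).
  { intros x c nYc [[q1 q2] [Aq [J Hq]]].
    (* reduce to the X-endpoint *)
    assert (Eq : E q1 q2) by (apply (cc_E V E _ _ U Aq)).
    pose proof (L _ c Aq nYc) as Lq. simpl in Lq.
    pose proof (L _ c A0 nYc) as L0. simpl in L0.
    destruct (classic (X c)) as [Xc|nXc].
    - assert (Ekc : E vk c).
      { destruct (P vi c vk Xi Xc nXk) as [[H1 _] _]. apply Hs. apply H1. apply Hs. exact Eki. }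
      assert (Eic : E vi c) by (apply L0; exact Ekc).
      unfold Jp, Kp in J; simpl in J.
      destruct J as [[X1 [nX2 _]]|[X2 [nX1 _]]].
      + assert (E q2 c). { destruct (P q1 c q2 X1 Xc nX2) as [[H1 _] _]. apply Hs. apply H1. exact Eq. }
        destruct Hq as [<-|<-]; split; intros; auto. apply Lq; auto.
      + assert (E q1 c). { destruct (P q2 c q1 X2 Xc nX1) as [[H1 _] _]. apply Hs. apply H1. apply Hs. exact Eq. }
        destruct Hq as [<-|<-]; split; intros; auto. apply Lq; auto.
    - unfold Jp, Kp in J; simpl in J.
      destruct J as [[X1 [nX2 _]]|[X2 [nX1 _]]].
      + destruct (P q1 vi c X1 Xi nXc) as [[H1 H2] _].
        destruct Hq as [<-|<-]; split; intro; auto.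
        * apply H1. apply Lq. auto.
        * apply Lq. auto.
      + destruct (P q2 vi c X2 Xi nXc) as [[H1 H2] _].
        destruct Hq as [<-|<-]; split; intro; auto.
        * apply H1. apply Lq. auto.
        * apply Lq. auto. }
  assert (PY : partitive V E Y).
  { intros a b c Ya Yb nYc.
    assert (Ha : E a c <-> E vi c).
    { apply Hx; auto. destruct Ya as [q [Aq Hq]]. exists q; auto. }
    assert (Hb : E b c <-> E vi c).
    { apply Hx; auto. destruct Yb as [q [Aq Hq]]. exists q; auto. }
    split; split; intro H; try (apply Hs; apply Hb; apply Ha; apply Hs; exact H);
      try (apply Hs; apply Ha; apply Hb; apply Hs; exact H);
      try (apply Hb; apply Ha; exact H); try (apply Ha; apply Hb; exact H). }
  destruct (St Y PY) as [HXY|HYX].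
  - exists vi. split; auto. exists (vk, vi). simpl; auto.
  - apply nYj. apply HXY; auto.
  - apply nXk. apply HYX. exists (vk, vi). simpl; auto.
Qed.

Theorem theorem3p7 (V : Type) (E : V -> V -> Prop) (X : V -> Prop)
    (vs : list V) :
  undirected V E ->
  strong_partitive V E X ->
  simplex V E vs ->
  (exists q, multiplex V E vs q /\ edges_in V E X q) ->
  forall q, multiplex V E vs q -> edges_in V E X q.
Proof.
  intros U St Sx [q0 [[p [Ep [[e [Se Ape]] Apq0]]] Hq0]] q [p' [Ep' [[e' [Se' Ape']] Apq]]].
  pose proof U as [Hirr Hs]. pose proof St as [P _].
  destruct Sx as [ND [Len [Cpl Dist]]].
  assert (Hp : edges_in V E X p) by (eapply ein_back; eauto).
  assert (He : edges_in V E X e) by (eapply ein_cc; eauto).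
  destruct e as [vi vj]. destruct He as [Eij [Xi Xj]]. destruct Se as [Ini [Inj _]].
  simpl in *.
  assert (nij : vi <> vj) by (intro; subst; eapply Hirr; eauto).
  assert (Hall : forall v, In v vs -> X v).
  { intros v Inv. destruct (classic (X v)) as [|nXv]; auto. exfalso.
    assert (vi_ne : v <> vi) by (intro; subst; auto).
    assert (vj_ne : v <> vj) by (intro; subst; auto).
    apply (no_cross V E X v vi vj U St nXv Xi Xj (Cpl v vi Inv Ini vi_ne)).
    intro C.
    apply (Dist v vi v vj Inv Ini Inv Inj vi_ne vj_ne).
    - intros [[_ H]|[_ H]]; auto.
    - intro r. split; intro H.
      + apply (cc_trans V E (v, vj) (v, vi) r U); [apply cc_sym; auto|exact H].
      + apply (cc_trans V E (v, vi) (v, vj) r U); auto. }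
  destruct e' as [a b]. destruct Se' as [Ina [Inb Eab]]. simpl in *.
  assert (He' : edges_in V E X (a, b)) by (split; simpl; auto).
  assert (Hp' : edges_in V E X p') by exact (ein_back V E X p' (a, b) U P Ep' Ape' He').
  exact (ein_cc V E X p' q U P Apq Hp').
Qed.
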